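(* In the stochastic linear bandit setting with SGD updates described below, assume $0<\eta\le\lambda/L^2$. Then for all $t\in\mathbb{N}$, almost surely, $$X_t\le X_{t-1}+N_t,\qquad N_t=2\eta\epsilon_t(\theta_{t-1}-\theta_* )^\top x_t-2\eta^3\epsilon_t(\theta_{t-1}-\theta_* )^\top x_t\,\|x_t\|_{V_{t-1}^{-1}}^4+2\epsilon_t^2\eta^2\|x_t\|_{V_{t-1}^{-1}}^2,$$ where $X_t=\|\theta_t-\theta_*\|_{V_t}^2$. In particular $X_t\le X_0+\sum_{i=1}^tN_i$.
   Context: Setting: unknown $\theta_*\in\mathbb{R}^d$ with $\|\theta_*\|_2\le L_*$. At each round $t\ge1$ a decision set $D_t\subseteq\{x\in\mathbb{R}^d:\|x\|_2\le L\}$ is given, the agent chooses $x_t\in D_t$ based on the past, and observes $y_t=\theta_*^\top x_t+\epsilon_t$, where $|\epsilon_t|\le1$ almost surely and $\mathbb{E}[\epsilon_t\mid x_{1:t},\epsilon_{1:t-1}]=0$. With $\lambda>0$ and step size $\eta>0$, the learner maintains $V_0=\lambda I$, $\theta_0=0$, and for $t\ge1$: $V_t=V_{t-1}+\eta x_tx_t^\top$ and $\theta_t=\theta_{t-1}+\eta V_{t-1}^{-1}(y_t-\theta_{t-1}^\top x_t)x_t$. For a positive definite matrix $A$, $\|v\|_A=\sqrt{v^\top Av}$. *)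

(* Defs.v *)
From HB Require Import structures.
From mathcomp Require Import all_boot all_order all_algebra.
From mathcomp Require Import reals.
Set Implicit Arguments. Unset Strict Implicit. Unset Printing Implicit Defensive.
Import Order.TTheory GRing.Theory Num.Theory.
Local Open Scope ring_scope.

Section Bandit.
Variables (R : realType) (d : nat).

Definition qform (A : 'M[R]_d) (v w : 'cV[R]_d) : R := (v^T *m A *m w) 0 0.

Definition norm2 (v : 'cV[R]_d) : R := Num.sqrt ((v^T *m v) 0 0).

Definition wnorm (A : 'M[R]_d) (v : 'cV[R]_d) : R := Num.sqrt (qform A v v).

Definition dotv (u v : 'cV[R]_d) : R := (u^T *m v) 0 0.

(* SGD learner state (V_n, theta_n) given the actions x and observations y;
   x 0, y 0 are unused (rounds start at t = 1). *)
Fixpoint sgd_state (lam eta : R) (x : nat -> 'cV[R]_d) (y : nat -> R) (n : nat)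
  : 'M[R]_d * 'cV[R]_d :=
  match n with
  | 0 => (lam%:M, 0)
  | m.+1 =>
      let: (V, th) := sgd_state lam eta x y m in
      (V + eta *: (x n *m (x n)^T),
       th + (eta * (y n - dotv th (x n))) *: (invmx V *m x n))
  end.

Definition Vt lam eta x y n := (sgd_state lam eta x y n).1.
Definition thetat lam eta x y n := (sgd_state lam eta x y n).2.

Definition Xt lam eta x y (thstar : 'cV[R]_d) n : R :=
  wnorm (Vt lam eta x y n) (thetat lam eta x y n - thstar) ^+ 2.

Definition Nt lam eta x y (eps : nat -> R) (thstar : 'cV[R]_d) t : R :=
  let th := thetat lam eta x y t.-1 in
  let Vinv := invmx (Vt lam eta x y t.-1) in
  let g := dotv (th - thstar) (x t) in
  2 * eta * eps t * g
  - 2 * eta ^+ 3 * eps t * g * wnorm Vinv (x t) ^+ 4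
  + 2 * eps t ^+ 2 * eta ^+ 2 * wnorm Vinv (x t) ^+ 2.

End Bandit.

(* Main.v *)
Require Import Defs.
From mathcomp Require Import all_boot all_order all_algebra reals ring lra.
Import Order.TTheory GRing.Theory Num.Theory. Local Open Scope ring_scope.
Section S.
Variables (R : realType) (d : nat).
Implicit Types (A B : 'M[R]_d) (u v w : 'cV[R]_d).

Lemma e11 (A B : 'M[R]_1) : (A *m B) 0 0 = A 0 0 * B 0 0.
Proof. by rewrite !mxE big_ord1. Qed.

Lemma qformDl A u v w : qform A (u + v) w = qform A u w + qform A v w.
Proof. by rewrite /qform linearD /= !mulmxDl mxE. Qed.
Lemma qformDr A u v w : qform A w (u + v) = qform A w u + qform A w v.
Proof. by rewrite /qform !mulmxDr mxE. Qed.
Lemma qformZl A c u w : qform A (c *: u) w = c * qform A u w.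
Proof. by rewrite /qform linearZ /= -!scalemxAl mxE. Qed.
Lemma qformZr A c u w : qform A w (c *: u) = c * qform A w u.
Proof. by rewrite /qform -!scalemxAr mxE. Qed.
Lemma qformDA A B u w : qform (A + B) u w = qform A u w + qform B u w.
Proof. by rewrite /qform mulmxDr mulmxDl mxE. Qed.
Lemma qformZA A c u w : qform (c *: A) u w = c * qform A u w.
Proof. by rewrite /qform -scalemxAr -scalemxAl mxE. Qed.
Lemma dotvC u v : dotv u v = dotv v u.
Proof.
rewrite /dotv.
have -> : (u^T *m v) 0 0 = ((u^T *m v)^T) 0 0 by rewrite [RHS]mxE.
by rewrite trmx_mul trmxK.
Qed.
Lemma qform_outer x u w : qform (x *m x^T) u w = dotv u x * dotv w x.
Proof. by rewrite /qform !mulmxA -(mulmxA (u^T *m x)) (e11 (u^T *m x)) -/(dotv u x) -/(dotv x w) (dotvC x w). Qed.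
Lemma qformC A u w : A^T = A -> qform A u w = qform A w u.
Proof.
move=> hA; rewrite /qform.
have -> : (u^T *m A *m w) 0 0 = ((u^T *m A *m w)^T) 0 0 by rewrite [RHS]mxE.
by rewrite !trmx_mul trmxK hA mulmxA.
Qed.
Lemma qform_inv A u x : A \in unitmx -> qform A u (invmx A *m x) = dotv u x.
Proof. by move=> hA; rewrite /qform -mulmxA (mulmxA A) mulmxV // mul1mx. Qed.
Lemma qform_scal c u w : qform c%:M u w = c * dotv u w.
Proof. by rewrite /qform mul_mx_scalar -scalemxAl mxE. Qed.
Lemma dotv_ge0 u : 0 <= dotv u u.
Proof. rewrite /dotv mxE; apply: sumr_ge0 => i _; rewrite mxE; rewrite -expr2; exact: sqr_ge0. Qed.
Lemma dotv_eq0 u : dotv u u = 0 -> u = 0.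
Proof.
rewrite /dotv mxE => /eqP; rewrite psumr_eq0 => [/allP h|i _]; last first.
  by rewrite mxE -expr2 sqr_ge0.
apply/matrixP => i j; rewrite (ord1 j) mxE.
have := h i (mem_index_enum _); rewrite mxE /= => /eqP/eqP.
by rewrite mulf_eq0 orbb => /eqP.
Qed.
Lemma alg_ineq (X c g e s eta : R) : c = eta*(e-g) -> 0 <= s -> eta * s <= 1 -> 0 < eta ->
 X + c*g + c*g + c*c*s + eta*((g + c*s)*(g+c*s)) <= X + (2*eta*e*g - 2*eta^+3*e*g*s^+2 + 2*e^+2*eta^+2*s).
Proof.
move=> -> hs ha he.
rewrite -subr_ge0.
have -> : X + (2*eta*e*g - 2*eta^+3*e*g*s^+2 + 2*e^+2*eta^+2*s) - (X + eta * (e - g) * g + eta * (e - g) * g + eta * (e - g) * (eta * (e - g)) * s + eta * ((g + eta * (e - g) * s) * (g + eta * (e - g) * s)))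
 = eta*(g^+2*(1+eta*s-(eta*s)^+2) + e^+2*(eta*s)*(1-eta*s)) by ring.
apply: mulr_ge0; first lra.
have h1 : 0 <= eta * s by apply: mulr_ge0 => //; lra.
have h2 : (eta*s)^+2 <= eta * s by rewrite expr2 ler_piMl.
apply: addr_ge0; apply: mulr_ge0; rewrite ?sqr_ge0 //; try lra.
apply: mulr_ge0; rewrite ?sqr_ge0 //.
Qed.

Lemma dotvDl u v w : dotv (u + v) w = dotv u w + dotv v w.
Proof. by rewrite /dotv linearD /= mulmxDl mxE. Qed.
Lemma dotvZl c u w : dotv (c *: u) w = c * dotv u w.
Proof. by rewrite /dotv linearZ /= -scalemxAl mxE. Qed.
Lemma dotvNl u w : dotv (- u) w = - dotv u w.
Proof. by rewrite -scaleN1r dotvZl mulN1r. Qed.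

Definition PD (lam : R) A := A^T = A /\ forall v, lam * dotv v v <= qform A v v.

Lemma PD_unit lam A : 0 < lam -> PD lam A -> A \in unitmx.
Proof.
move=> hl [hs hp]; rewrite unitmxE unitfE; apply/negP => /det0P [v hv0 hv].
have h0 : qform A v^T v^T = 0 by rewrite /qform trmxK hv mul0mx mxE.
have := hp v^T; rewrite h0 => h.
have hd : dotv v^T v^T = 0.
  apply/eqP; rewrite eq_le dotv_ge0 andbT.
  by rewrite -(pmulr_rle0 _ hl).
move: hv0; rewrite -(trmxK v) (dotv_eq0 _ hd) trmx0 eqxx //.
Qed.

Lemma PD_sbound lam A x : 0 < lam -> PD lam A ->
  0 <= qform (invmx A) x x /\ lam * qform (invmx A) x x <= dotv x x.
Proof.
move=> hl hP; have hU := @PD_unit lam A hl hP; case: hP => hs hp.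
set w := invmx A *m x.
have hsw : qform (invmx A) x x = qform A w w.
  by rewrite qform_inv // dotvC /dotv /qform mulmxA.
have hW := hp w; have hW0 := dotv_ge0 w.
have hs0 : 0 <= qform (invmx A) x x.
  rewrite hsw; apply: le_trans hW; exact: mulr_ge0 (ltW hl) hW0.
split => //.
have := dotv_ge0 (x + (- lam) *: w).
rewrite !dotvDl !dotvZl (dotvC _ (x + _)) (dotvC _ (x + _)) !dotvDl !dotvZl.
rewrite (dotvC w x).
have -> : dotv x w = qform (invmx A) x x by rewrite /dotv /qform mulmxA.
move: hW; rewrite -hsw => hW.
have hW2 : lam * (lam * dotv w w) <= lam * qform (invmx A) x x.
  by rewrite ler_pM2l.
nra.
Qed.

Section Step.
Variables (lam eta : R) (x : nat -> 'cV[R]_d) (y : nat -> R).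
Lemma Vt_S n : Vt lam eta x y n.+1 = Vt lam eta x y n + eta *: (x n.+1 *m (x n.+1)^T).
Proof. by rewrite /Vt /=; case: (sgd_state _ _ _ _ n). Qed.
Lemma thetat_S n : thetat lam eta x y n.+1 = thetat lam eta x y n +
  (eta * (y n.+1 - dotv (thetat lam eta x y n) (x n.+1))) *: (invmx (Vt lam eta x y n) *m x n.+1).
Proof. by rewrite /Vt /thetat /=; case: (sgd_state _ _ _ _ n). Qed.
Lemma Vt_PD n : 0 <= eta -> PD lam (Vt lam eta x y n).
Proof.
move=> he; elim: n => [|n [hs hp]].
  split; first by rewrite /Vt /= tr_scalar_mx.
  by move=> v; rewrite /Vt /= qform_scal.
rewrite Vt_S; split.
  by rewrite linearD linearZ /= hs trmx_mul trmxK.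
move=> v; rewrite qformDA qformZA qform_outer.
have := hp v; have := sqr_ge0 (dotv v (x n.+1)); rewrite expr2 => h1 h2.
have : 0 <= eta * (dotv v (x n.+1) * dotv v (x n.+1)) by apply: mulr_ge0.
lra.
Qed.
End Step.
End S.
Arguments qformDl {R d}.
Arguments qformDr {R d}.
Arguments qformZl {R d}.
Arguments qformZr {R d}.
Arguments qformDA {R d}.
Arguments qformZA {R d}.
Arguments dotvC {R d}.
Arguments qform_outer {R d}.
Arguments qformC {R d}.
Arguments qform_inv {R d}.
Arguments qform_scal {R d}.
Arguments dotv_ge0 {R d}.
Arguments dotv_eq0 {R d}.
Arguments dotvDl {R d}.
Arguments dotvZl {R d}.
Arguments dotvNl {R d}.
Arguments PD {R d}.
Arguments PD_unit {R d}.
Arguments PD_sbound {R d}.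
Arguments Vt_S {R d}.
Arguments thetat_S {R d}.
Arguments Vt_PD {R d}.
Arguments alg_ineq {R}.
Arguments e11 {R}.

Theorem mainTheorem8 (R : realType) (d : nat) (L Lstar lam eta : R)
  (thstar : 'cV[R]_d) (D : nat -> 'cV[R]_d -> Prop)
  (x : nat -> 'cV[R]_d) (eps : nat -> R) :
  norm2 thstar <= Lstar ->
  (forall t v, D t v -> norm2 v <= L) ->
  (forall t, (1 <= t)%N -> D t (x t)) ->
  (forall t, (1 <= t)%N -> `|eps t| <= 1) ->
  0 < lam -> 0 < eta -> eta <= lam / L ^+ 2 ->
  let y := fun t => dotv thstar (x t) + eps t in
  (forall t, (1 <= t)%N ->
     Xt lam eta x y thstar t <= Xt lam eta x y thstar t.-1 + Nt lam eta x y eps thstar t)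
  /\
  (forall t, Xt lam eta x y thstar t
             <= Xt lam eta x y thstar 0 + \sum_(1 <= i < t.+1) Nt lam eta x y eps thstar i).
Proof.
move=> _ hD hx _ hl he hel y.
have step : forall t, (1 <= t)%N ->
    Xt lam eta x y thstar t <= Xt lam eta x y thstar t.-1 + Nt lam eta x y eps thstar t.
  case=> // t _ /=.
  have hPD := Vt_PD lam eta x y t (ltW he).
  have hPD1 := Vt_PD lam eta x y t.+1 (ltW he).
  have hU := PD_unit _ _ hl hPD.
  have [hs0 hsb] := PD_sbound _ _ (x t.+1) hl hPD.
  set V := Vt lam eta x y t in hPD hU hs0 hsb *.
  set th := thetat lam eta x y t.
  set xx := x t.+1.
  set s := qform (invmx V) xx xx in hs0 hsb.
  have hxL : dotv xx xx <= L ^+ 2.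
    have hn := hD _ _ (hx t.+1 isT).
    have hn0 : 0 <= norm2 xx by rewrite /norm2 sqrtr_ge0.
    have : norm2 xx ^+ 2 = dotv xx xx by rewrite /norm2 sqr_sqrtr // dotv_ge0.
    move=> <-; rewrite !expr2; nra.
  have hL2 : 0 < L ^+ 2.
    rewrite lt_neqAle sqr_ge0 andbT; apply/eqP => hL0.
    by move: hel; rewrite -hL0 invr0 mulr0 => /(lt_le_trans he); rewrite ltxx.
  have hel2 : eta * L ^+ 2 <= lam by rewrite -ler_pdivlMr.
  have has : eta * s <= 1.
    have h1 : eta * (lam * s) <= eta * L ^+ 2.
      rewrite ler_pM2l //; exact: le_trans hsb hxL.
    have h2 : lam * (eta * s) <= lam * 1 by rewrite mulr1 mulrCA; exact: le_trans h1 hel2.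
    by rewrite ler_pM2l in h2.
  rewrite /Xt /Nt /= -/V -/th.
  have hq0 : forall (A : 'M[R]_d) (v : 'cV[R]_d), PD lam A -> 0 <= qform A v v.
    move=> A v; rewrite /PD => -[_ hp]; apply: (le_trans _ (hp v)); exact: mulr_ge0 (ltW hl) (dotv_ge0 v).
  rewrite /wnorm !sqr_sqrtr; try exact: hq0.
  rewrite -[4%N]/(2 * 2)%N exprM sqr_sqrtr -/s; last exact: hs0.
  rewrite thetat_S Vt_S -/V -/th -/xx.
  set e := eps t.+1.
  set g := dotv (th - thstar) xx.
  have hy : y t.+1 - dotv th xx = e - g.
    rewrite /y /g -/xx /e dotvDl dotvNl; lra.
  rewrite hy; set c := eta * (e - g).
  set w := invmx V *m xx.
  have -> : th + c *: w - thstar = (th - thstar) + c *: w by rewrite addrAC.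
  clear hy; rewrite /c /g; clear c g; set Dl := th - thstar; clearbody Dl; set g := dotv Dl xx; set c := eta * (e - g).
  rewrite qformDA qformZA qform_outer qformDl !qformDr !qformZl !qformZr.
  rewrite (qformC V w Dl (proj1 hPD)) !qform_inv // -/g.
  rewrite dotvDl dotvZl -/g.
  have -> : dotv w xx = s by rewrite dotvC /w /dotv /s /qform mulmxA.
  have := alg_ineq (qform V Dl Dl) c g e s eta (erefl c) hs0 has he.
  lra.
  exact: hs0.
split => //.
elim=> [|t IH]; first by rewrite big_geq // addr0.
rewrite big_nat_recr //=.
apply: le_trans (step t.+1 isT) _; rewrite /=.
lra.
Qed.
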